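(* Let $(X,\tau)$ be a topological space and let $\delta$ be a quasi-proximity on $X$ compatible with $\tau$ (i.e. $\tau(\delta)=\tau$) such that $\mathcal{V}_\delta$ is transitive. Let $\mathcal{V}\in T(\tau)$ with $\mathcal{V}_\delta\subseteq\mathcal{V}$. Then $\mathcal{V}\in\pi(\delta)$ if and only if for every $N\in\tau$ with $U_N\in\mathcal{V}$ we have $N\in\mathcal{B}(\mathcal{V}_\delta)$.
   Context: Quasi-uniformities and quasi-proximities are in the sense of Fletcher–Lindgren. For a quasi-uniformity $\mathcal{V}$ on $X$, $\tau(\mathcal{V})$ and $\delta(\mathcal{V})$ denote the topology and the quasi-proximity induced by $\mathcal{V}$; $\tau(\delta)$ is the topology induced by a quasi-proximity $\delta$. A quasi-uniformity $\mathcal{V}$ on $(X,\tau)$ is compatible if $\tau(\mathcal{V})=\tau$; it is transitive if it has a base of transitive entourages ($U\circ U\subseteq U$). $T(\tau)$ denotes the set of all compatible transitive quasi-uniformities on $(X,\tau)$. For a quasi-proximity $\delta$, $\pi(\delta)=\{\mathcal{V}:\mathcal{V}$ a quasi-uniformity on $X$ with $\delta(\mathcal{V})=\delta\}$; it is nonempty and has a coarsest element, denoted $\mathcal{V}_\delta$, which is totally bounded (and the only totally bounded member of $\pi(\delta)$). For $N\subseteq X$, $U_N=(N\times N)\cup((X\setminus N)\times X)$. For a quasi-uniformity $\mathcal{V}$ compatible with $\tau$, $\mathcal{B}(\mathcal{V})=\{N\in\tau: U_N\in\mathcal{V}\}$; when $\mathcal{V}$ is totally bounded and transitive this is an l-base,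 i.e. a base for $\tau$ closed under finite unions and finite intersections and containing $\emptyset$ and $X$. *)

(* Defs.v *)
From Stdlib Require Import Classical.

Set Implicit Arguments.

Definition set (X : Type) := X -> Prop.
Definition relX (X : Type) := X -> X -> Prop.

Definition is_topology (X : Type) (tau : set X -> Prop) : Prop :=
  tau (fun _ => True) /\ tau (fun _ => False) /\
  (forall A B, tau A -> tau B -> tau (fun x => A x /\ B x)) /\
  (forall F : set X -> Prop, (forall A, F A -> tau A) ->
     tau (fun x => exists A, F A /\ A x)) /\
  (forall A B, (forall x, A x <-> B x) -> tau A -> tau B).

Definition comp (X : Type) (U W : relX X) : relX X :=
  fun x z => exists y, W x y /\ U y z.

Definition subrel (X : Type) (U W : relX X) : Prop := forall x y, U x y -> W x y.

Definition quasi_uniformity (X : Type) (V : relX X -> Prop) : Prop :=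
  V (fun _ _ => True) /\
  (forall U W, V U -> subrel U W -> V W) /\
  (forall U W, V U -> V W -> V (fun x y => U x y /\ W x y)) /\
  (forall U, V U -> forall x, U x x) /\
  (forall U, V U -> exists W, V W /\ subrel (comp W W) U).

Definition tau_qu (X : Type) (V : relX X -> Prop) : set X -> Prop :=
  fun G => forall x, G x -> exists U, V U /\ forall y, U x y -> G y.

Definition compatible (X : Type) (V : relX X -> Prop) (tau : set X -> Prop) :=
  forall G, tau_qu V G <-> tau G.

Definition transitive_qu (X : Type) (V : relX X -> Prop) : Prop :=
  forall U, V U -> exists W, V W /\ subrel W U /\ subrel (comp W W) W.

Definition in_T (X : Type) (tau : set X -> Prop) (V : relX X -> Prop) : Prop :=
  quasi_uniformity V /\ compatible V tau /\ transitive_qu V.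

Definition quasi_proximity (X : Type) (d : set X -> set X -> Prop) : Prop :=
  (forall A B C, d (fun x => A x \/ B x) C <-> (d A C \/ d B C)) /\
  (forall A B C, d A (fun x => B x \/ C x) <-> (d A B \/ d A C)) /\
  (forall A B, d A B -> (exists x, A x) /\ (exists x, B x)) /\
  (forall A B, (exists x, A x /\ B x) -> d A B) /\
  (forall A B, ~ d A B -> exists C, ~ d A C /\ ~ d (fun x => ~ C x) B).

(* Topology induced by a quasi-proximity: closure cl A = {x | {x} d A};
   G is open iff its complement is closed. *)
Definition tau_qp (X : Type) (d : set X -> set X -> Prop) : set X -> Prop :=
  fun G => forall x, d (fun y => y = x) (fun y => ~ G y) -> ~ G x.

Definition delta_qu (X : Type) (V : relX X -> Prop) : set X -> set X -> Prop :=
  fun A B => forall U, V U -> exists x y, A x /\ B y /\ U x y.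

Definition in_pi (X : Type) (d : set X -> set X -> Prop) (V : relX X -> Prop) : Prop :=
  quasi_uniformity V /\ forall A B, delta_qu V A B <-> d A B.

(* V_d : the coarsest element of pi(d), i.e. the intersection of all members
   of pi(d) (which is itself a member of pi(d) when d is a quasi-proximity). *)
Definition V_delta (X : Type) (d : set X -> set X -> Prop) : relX X -> Prop :=
  fun U => forall V, in_pi d V -> V U.

Definition U_N (X : Type) (N : set X) : relX X :=
  fun x y => (N x /\ N y) \/ ~ N x.

Definition B_of (X : Type) (tau : set X -> Prop) (V : relX X -> Prop) : set X -> Prop :=
  fun N => tau N /\ V (U_N N).

(* Main.v *)
Require Import Defs.
From Stdlib Require Import Classical.

Theorem lemma2p1 (X : Type) (tau : set X -> Prop) (d : set X -> set X -> Prop)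
  (Htop : is_topology tau)
  (Hqp : quasi_proximity d)
  (Hcomp : forall G, tau_qp d G <-> tau G)
  (Htrans : transitive_qu (V_delta d))
  (V : relX X -> Prop)
  (HV : in_T tau V)
  (Hsub : forall U, V_delta d U -> V U) :
  in_pi d V <-> (forall N, tau N -> V (U_N N) -> B_of tau (V_delta d) N).
Proof.
  destruct HV as [Hqu [HcV HtV]].
  destruct Hqu as [VT [Vup [Vcap [Vrefl Vcomp]]]].
  destruct Hqp as [_ [_ [Hne _]]].
  split.
  - intros [_ Hpi] N HN HVN. split; [exact HN|].
    intros W [[_ [Wup _]] HW].
    assert (Hn : ~ d N (fun y => ~ N y)).
    { intro H. apply Hpi in H. destruct (H _ HVN) as [x [y [Hx [Hy Hxy]]]].
      destruct Hxy as [[_ Hy'] | Hx']; tauto. }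
    assert (Hn' : ~ delta_qu W N (fun y => ~ N y)) by (intro H; apply Hn, HW, H).
    unfold delta_qu in Hn'. apply not_all_ex_not in Hn'. destruct Hn' as [U HU].
    apply imply_to_and in HU. destruct HU as [WU HU].
    apply (Wup U); [exact WU|].
    intros x y Hxy. unfold U_N. destruct (classic (N x)) as [Hx|Hx]; [|right; exact Hx].
    left. split; [exact Hx|]. apply NNPP. intro Hy. apply HU. exists x, y. tauto.
  - intros HB. split.
    { repeat split; assumption. }
    intros A B. split.
    + intros HAB. apply NNPP. intro HnAB.
      set (U := fun x y : X => ~ A x \/ ~ B y).
      assert (HU : V_delta d U).
      { intros W [[_ [Wup _]] HW].
        assert (Hn' : ~ delta_qu W A B) by (intro H; apply HnAB, HW, H).
        unfold delta_qu in Hn'. apply not_all_ex_not in Hn'. destruct Hn' as [U' HU'].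
        apply imply_to_and in HU'. destruct HU' as [WU HU'].
        apply (Wup U'); [exact WU|].
        intros x y Hxy. unfold U. apply NNPP. intro Hc. apply HU'.
        exists x, y. split; [apply NNPP; tauto|]. split; [apply NNPP; tauto|]. exact Hxy. }
      destruct (HAB U (Hsub U HU)) as [x [y [Hx [Hy Hxy]]]].
      destruct Hxy; tauto.
    + intros HdAB. apply NNPP. intro Hnd.
      destruct (Hne A B HdAB) as [[a Ha] _].
      destruct (classic (exists W, in_pi d W)) as [[W0 HW0] | Hnone].
      2:{ assert (HF : V_delta d (fun _ _ => False)).
          { intros W HW. exfalso. apply Hnone. exists W. exact HW. }
          exact (Vrefl _ (Hsub _ HF) a). }
      unfold delta_qu in Hnd. apply not_all_ex_not in Hnd. destruct Hnd as [U HU].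
      apply imply_to_and in HU. destruct HU as [VU HU].
      destruct (HtV U VU) as [W [VW [WU Wtr]]].
      set (N := fun y => exists x, A x /\ W x y).
      assert (HN : tau N).
      { apply HcV. intros y [x [Hx Hxy]]. exists W. split; [exact VW|].
        intros z Hz. exists x. split; [exact Hx|]. apply Wtr. exists y. tauto. }
      assert (HVN : V (U_N N)).
      { apply (Vup W); [exact VW|]. intros y z Hyz. unfold U_N.
        destruct (classic (N y)) as [Hy|Hy]; [|right; exact Hy].
        left. split; [exact Hy|]. destruct Hy as [x [Hx Hxy]].
        exists x. split; [exact Hx|]. apply Wtr. exists y. tauto. }
      destruct (HB N HN HVN) as [_ HdN].
      pose proof (HdN W0 HW0) as HW0N.
      destruct HW0 as [_ HW0]. apply HW0 in HdAB.
      destruct (HdAB _ HW0N) as [x [y [Hx [Hy Hxy]]]].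
      assert (Nx : N x) by (exists x; split; [exact Hx | exact (Vrefl W VW x)]).
      destruct Hxy as [[_ [x' [Hx' Hx'y]]] | Hc]; [|tauto].
      apply HU. exists x', y. split; [exact Hx'|]. split; [exact Hy|]. apply WU; exact Hx'y.
Qed.
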